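(* For every integer $r\ge 4$ there exists an infinite family of connected $r$-regular graphs $G$, each containing a pair of closed twins, such that $\gamma^{LD}(G)>\frac{n(G)}{2}$.
   Context: All graphs are finite and simple; $n(G)$ is the number of vertices. A graph is $r$-regular if every vertex has degree $r$. Two distinct vertices $u,v$ are closed twins if $N[u]=N[v]$. For $S\subseteq V(G)$, $I(v)=N[v]\cap S$. A set $S$ is locating-dominating if every vertex $v$ has $I(v)\ne\emptyset$ and $I(u)\neq I(v)$ for all distinct $u,v\in V(G)\setminus S$. $\gamma^{LD}(G)$ denotes the minimum size of a locating-dominating set of $G$. *)

(* Defs.v *)
From mathcomp Require Import all_boot.
Set Implicit Arguments. Unset Strict Implicit. Unset Printing Implicit Defensive.

Section Graphs.
Variable T : finType.
Variable e : rel T.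

Definition simple_graph : Prop := symmetric e /\ irreflexive e.

Definition nbhd (v : T) : {set T} := [set u | e v u].
Definition cnbhd (v : T) : {set T} := [set u | (u == v) || e v u].

Definition regular (r : nat) : Prop := forall v : T, #|nbhd v| = r.

Definition connected_graph : Prop := forall u v : T, connect e u v.

Definition closed_twins (u v : T) : Prop := u != v /\ cnbhd u = cnbhd v.

Definition has_closed_twins : Prop := exists u v : T, closed_twins u v.

Definition Iset (S : {set T}) (v : T) : {set T} := cnbhd v :&: S.

Definition locating_dominating (S : {set T}) : bool :=
  [forall v, Iset S v != set0] &&
  [forall u, forall v,
     ((u \notin S) && (v \notin S) && (u != v)) ==> (Iset S u != Iset S v)].

(* minimum size of a locating-dominating set (V itself is one, so the
   default value #|T| of the minimum is harmless) *)
Definition gammaLD : nat :=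
  \big[minn/#|T|]_(S : {set T} | locating_dominating S) #|S|.
End Graphs.

(* Main.v *)
Require Import Defs.
From mathcomp Require Import all_boot.
From mathcomp Require Import zify.
Set Implicit Arguments. Unset Strict Implicit. Unset Printing Implicit Defensive.

Section Core.
Variables (k m : nat).
Definition P := option (option 'I_m).
Definition T := ('I_k.+1 * P)%type.

Definition adj (u v : T) : bool :=
  match u.2, v.2 with
  | None, None => false
  | Some None, Some None => false
  | None, Some None => u.1 == ordS v.1
  | Some None, None => v.1 == ordS u.1
  | Some (Some i), Some (Some j) => (u.1 == v.1) && (i != j)
  | _, _ => u.1 == v.1
  end.

Lemma adj_sym : symmetric adj.
Proof.
move=> [g x] [h y]; rewrite /adj /=.
case: x => [[i|]|]; case: y => [[j|]|] //; by rewrite eq_sym // [j == i]eq_sym.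
Qed.

Lemma adj_irr : irreflexive adj.
Proof. by move=> [g [[i|]|]]; rewrite /adj /= ?eqxx. Qed.

Definition Cpos : {set P} := ~: [set None; Some None].

Lemma cnbhd_c g i : cnbhd adj (g, Some (Some i)) = [set w : T | w.1 == g].
Proof.
apply/setP => [[h y]]; rewrite !inE /adj /=.
case: (eqVneq h g) => [->|hg]; case: y => [[j|]|] /=; rewrite ?xpair_eqE ?eqxx //=;
  rewrite ?(negbTE hg) ?[g == h]eq_sym ?(negbTE hg) //=.
case: (eqVneq i j) => [E|E]; first by rewrite E eqxx.
by rewrite orbT.
Qed.

Lemma card_P : #|{: P}| = m.+2.
Proof. by rewrite /P !card_option card_ord. Qed.

Lemma card_Cpos : #|Cpos| = m.
Proof.
have := cardsC [set None; Some None : P]; rewrite cards2 card_P /Cpos.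
by move=> [].

Qed.

Lemma nbhd_c g i : nbhd adj (g, Some (Some i)) = setX [set g] [set~ Some (Some i)].
Proof.
apply/setP => [[h y]]; rewrite !inE /adj /=.
case: y => [[j|]|] /=; rewrite ?andbT ?[g == h]eq_sym //.
by rewrite (inj_eq (@Some_inj _)) (inj_eq (@Some_inj _)) [j == i]eq_sym.
Qed.

Lemma nbhd_a g : nbhd adj (g, None) = (ord_pred g, Some None) |: setX [set g] Cpos.
Proof.
apply/setP => [[h y]]; rewrite !inE /adj /=.
case: y => [[j|]|] /=; rewrite ?xpair_eqE ?eqxx ?andbT ?andbF ?orbF //=.
apply/eqP/eqP => [->|->]; [by rewrite ordSK | by rewrite ord_predK].
Qed.

Lemma nbhd_b g : nbhd adj (g, Some None) = (ordS g, None) |: setX [set g] Cpos.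
Proof.
apply/setP => [[h y]]; rewrite !inE /adj /=.
case: y => [[j|]|] /=; rewrite ?xpair_eqE ?eqxx ?andbT ?andbF ?orbF //=.
Qed.

Lemma adj_regular : regular adj m.+1.
Proof.
move=> [g [[i|]|]].
- by rewrite nbhd_c cardsX cards1 cardsC1 card_P mul1n.
- rewrite nbhd_b cardsU1 cardsX cards1 card_Cpos mul1n.
  by rewrite in_setX /Cpos !inE eqxx /= andbF.
- rewrite nbhd_a cardsU1 cardsX cards1 card_Cpos mul1n.
  by rewrite in_setX /Cpos !inE eqxx /= andbF.
Qed.

Lemma adj_connected : 0 < m -> connected_graph adj.
Proof.
move=> m0; pose i0 : 'I_m := Ordinal m0.
pose c0 (g : 'I_k.+1) : T := (g, Some (Some i0)).
have csym : connect_sym adj by apply: sym_connect_sym; exact: adj_sym.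
have L1 : forall v : T, connect adj v (c0 v.1).
  move=> [g [[i|]|]]; rewrite /c0 /=.
  - case: (eqVneq i i0) => [->|ne]; first exact: connect0.
    by apply: connect1; rewrite /adj /= eqxx ne.
  - by apply: connect1; rewrite /adj /= eqxx.
  - by apply: connect1; rewrite /adj /= eqxx.
have L2 : forall g, connect adj (c0 g) (c0 (ordS g)).
  move=> g; apply: (@connect_trans _ _ (g, Some None)).
    by apply: connect1; rewrite /adj /= eqxx.
  apply: (@connect_trans _ _ (ordS g, None)).
    by apply: connect1; rewrite /adj /= eqxx.
  by apply: connect1; rewrite /adj /= eqxx.
have L3 : forall j (Hj : j < k.+1), connect adj (c0 ord0) (c0 (Ordinal Hj)).
  elim=> [|j IH] Hj.
    by have -> : Ordinal Hj = ord0 by apply: val_inj.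
  have Hj' : j < k.+1 by apply: ltnW.
  apply: connect_trans (IH Hj') _.
  have -> : Ordinal Hj = ordS (Ordinal Hj').
    by apply: val_inj; rewrite /= modn_small.
  exact: L2.
have L4 : forall g, connect adj (c0 ord0) (c0 g).
  by move=> [j Hj]; exact: L3.
move=> u v.
apply: connect_trans (L1 u) _.
apply: connect_trans _ (_ : connect adj (c0 v.1) v); last by rewrite csym.
apply: connect_trans (L4 v.1); by rewrite csym.
Qed.

Lemma adj_twins : 1 < m -> has_closed_twins adj.
Proof.
move=> m1.
have m0 : 0 < m by apply: ltnW.
exists (ord0, Some (Some (Ordinal m0))), (ord0, Some (Some (Ordinal m1))).
split; last by rewrite !cnbhd_c.
by rewrite xpair_eqE negb_and (inj_eq (@Some_inj _)) (inj_eq (@Some_inj _)) orbC.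
Qed.

Lemma card_I2 (U : finType) (X : {set U}) a b : a != b ->
  #|X :&: [set a; b]| = (a \in X) + (b \in X).
Proof.
move=> ab.
case Ha: (a \in X); case Hb: (b \in X).
- have -> : X :&: [set a; b] = [set a; b].
    by apply/setP => x; rewrite !inE; case: (eqVneq x a) => [->|xa]; [rewrite ?eqxx ?Ha ?Hb ?andbF ?andbT ?orbT //= | case: (eqVneq x b) => [->|xb]; rewrite ?eqxx ?Ha ?Hb ?andbF ?andbT ?orbF ?orbT //=].
  by rewrite cards2 ab.
- have -> : X :&: [set a; b] = [set a].
    by apply/setP => x; rewrite !inE; case: (eqVneq x a) => [->|xa]; [rewrite ?eqxx ?Ha ?Hb ?(negbTE ab) ?andbT ?andbF ?orbT //= | case: (eqVneq x b) => [->|xb]; rewrite ?eqxx ?Hb ?andbF ?andbT ?orbF ?orbT //= (negbTE xa)].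
  by rewrite cards1.
- have -> : X :&: [set a; b] = [set b].
    by apply/setP => x; rewrite !inE; case: (eqVneq x a) => [->|xa]; [rewrite ?eqxx ?Ha ?Hb ?(negbTE ab) ?andbT ?andbF //= | case: (eqVneq x b) => [->|xb]; rewrite ?eqxx ?Hb ?andbF ?andbT ?orbF ?orbT //= eq_sym (negbTE ab)].
  by rewrite cards1.
- have -> : X :&: [set a; b] = set0.
    by apply/setP => x; rewrite !inE; case: (eqVneq x a) => [->|xa]; [rewrite ?eqxx ?Ha ?Hb ?andbF ?andbT ?orbT //= | case: (eqVneq x b) => [->|xb]; rewrite ?eqxx ?Ha ?Hb ?andbF ?andbT ?orbF ?orbT //=].
  by rewrite cards0.
Qed.

Section LD.
Variable S : {set T}.
Hypothesis HS : locating_dominating adj S.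

Lemma loc u v : u \notin S -> v \notin S -> u != v -> Iset adj S u != Iset adj S v.
Proof.
move: HS => /andP [_ /forallP H] uS vS uv.
by have /forallP /(_ v) /implyP := H u; apply; rewrite uS vS uv.
Qed.

Definition Sg g := [set x : P | (g, x) \in S].
Definition Cg g := #|Cpos :&: Sg g|.

Lemma countS : #|S| = \sum_(g < k.+1) (((g, None) \in S) + ((g, Some None) \in S) + Cg g).
Proof.
rewrite -sum1_card big_mkcond /=.
have -> : \sum_(u : T) (if u \in S then 1 else 0) =
   \sum_(g < k.+1) \sum_(x : P) (if (g, x) \in S then 1 else 0).
  by rewrite pair_big; apply: eq_big => // -[g x].
apply: eq_bigr => g _.
have -> : \sum_(x : P) (if (g, x) \in S then 1 else 0) = #|Sg g|.
  by rewrite -sum1_card [RHS]big_mkcond; apply: eq_bigr => x _; rewrite inE.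
rewrite -(cardsID [set None; Some None] (Sg g)) card_I2 // !inE.
by rewrite /Cg setDE setIC.
Qed.

Lemma F1 g : m <= Cg g + 1.
Proof.
rewrite -card_Cpos -(cardsID (Sg g) Cpos) leq_add2l.
apply/card_le1_eqP => x y.
rewrite /Cpos /Sg !inE.
case: x => [[i|]|]; case: y => [[j|]|]; rewrite ?eqxx ?orbT ?andbF //= => Hi Hj.
case: (eqVneq i j) => [->//|ne].
have := @loc (g, Some (Some i)) (g, Some (Some j)).
rewrite /Iset !cnbhd_c eqxx.
move: Hi Hj => /andP[Hi _] /andP[Hj _].
rewrite Hi Hj xpair_eqE eqxx (inj_eq (@Some_inj _)) (inj_eq (@Some_inj _)) ne.
by move=> /(_ isT isT isT).
Qed.

Lemma F2 g : Cg g < m -> (g, None) \notin S -> (g, Some None) \notin S ->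
  ((ord_pred g, Some None) \in S) && ((ordS g, None) \in S).
Proof.
move=> Cm aS bS.
have [x xC xS] : exists2 x, x \in Cpos & x \notin Sg g.
  apply/subsetPn/negP => sub; move: Cm.
  by rewrite /Cg (setIidPl sub) card_Cpos ltnn.
move: xC xS; case: x => [[i|]|]; rewrite /Cpos /Sg !inE ?eqxx ?orbT //= => _ iS.
apply/andP; split.
- apply/negPn/negP => pS.
  have neq : (g, None) != (g, Some (Some i)) :> T by rewrite xpair_eqE negb_and orbC.
  have /negP := loc aS iS neq; apply.
  apply/eqP/setP => -[h y]; rewrite /Iset cnbhd_c !inE /adj /=.
  case: y => [[j|]|]; rewrite xpair_eqE /=.
  + have E1 : (Some (Some j) == None :> P) = false by [].
    by rewrite E1 andbF /= eq_sym.
  + case: (eqVneq h g) => [->|hg]; first by rewrite (negbTE bS) !andbF.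
    rewrite andbF /=; case: (eqVneq g (ordS h)) => [E|] //=.
    have -> : h = ord_pred g by rewrite E ordSK.
    by rewrite (negbTE pS).
  + by rewrite eqxx andbT orbF.
- apply/negPn/negP => pS.
  have neq : (g, Some None) != (g, Some (Some i)) :> T by rewrite xpair_eqE negb_and orbC.
  have /negP := loc bS iS neq; apply.
  apply/eqP/setP => -[h y]; rewrite /Iset cnbhd_c !inE /adj /=.
  case: y => [[j|]|]; rewrite xpair_eqE /=.
  + have E1 : (Some (Some j) == Some None :> P) = false by [].
    by rewrite E1 andbF /= eq_sym.
  + case: (eqVneq h g) => [->|hg]; first by rewrite (negbTE bS) !andbF.
    by [].
  + have E1 : (None == Some None :> P) = false by [].
    rewrite E1 andbF /=.
    case: (eqVneq h g) => [->|hg]; first by rewrite (negbTE aS) !andbF.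
    case: (eqVneq h (ordS g)) => [->|] //=; by rewrite (negbTE pS).
Qed.

Lemma sum_pred (F : 'I_k.+1 -> nat) : \sum_(g < k.+1) F (ord_pred g) = \sum_(g < k.+1) F g.
Proof. by rewrite [RHS](reindex_inj (@ord_pred_inj _)). Qed.

Lemma sum_succ (F : 'I_k.+1 -> nat) : \sum_(g < k.+1) F (ordS g) = \sum_(g < k.+1) F g.
Proof. by rewrite [RHS](reindex_inj (@ordS_inj _)). Qed.

Lemma LD_bound : 3 <= m -> #|{: T}| < 2 * #|S|.
Proof.
move=> m3.
have cardT : #|{: T}| = k.+1 * m.+2 by rewrite card_prod card_ord card_P.
pose a g : nat := ((g, None) \in S).
pose b g : nat := ((g, Some None) \in S).
have ab1 : forall g, a g <= 1 /\ b g <= 1 by move=> g; rewrite /a /b !leq_b1.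
have f2 : forall g, m <= Cg g \/ (a g = 1 \/ b g = 1) \/
                    (b (ord_pred g) = 1 /\ a (ordS g) = 1).
  move=> g; case: (leqP m (Cg g)) => [H|H]; [by left|right].
  case Ha: ((g, None) \in S); first by left; left; rewrite /a Ha.
  case Hb: ((g, Some None) \in S); first by left; right; rewrite /b Hb.
  right; have := F2 H; rewrite Ha Hb => /(_ isT isT) /andP [H1 H2].
  by rewrite /b /a H1 H2.
have I1 : forall g, 2 * m.+2 + a g + 2 * b g <=
     4 * (a g + b g + Cg g) + b (ord_pred g) + a (ordS g).
  move=> g; have := F1 g; have := f2 g; have := ab1 g; have := ab1 (ord_pred g);
  have := ab1 (ordS g); lia.
have I2 : forall g, 2 * m.+2 + 1 + a g + b g <=
     4 * (a g + b g + Cg g) + 2 * b (ord_pred g) + a (ordS g).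
  move=> g; have := F1 g; have := f2 g; have := ab1 g; have := ab1 (ord_pred g);
  have := ab1 (ordS g); lia.
have S1 : \sum_(g < k.+1) (2 * m.+2 + a g + 2 * b g) <=
     \sum_(g < k.+1) (4 * (a g + b g + Cg g) + b (ord_pred g) + a (ordS g)).
  by apply: leq_sum => g _; exact: I1.
have S2 : \sum_(g < k.+1) (2 * m.+2 + 1 + a g + b g) <=
     \sum_(g < k.+1) (4 * (a g + b g + Cg g) + 2 * b (ord_pred g) + a (ordS g)).
  by apply: leq_sum => g _; exact: I2.
rewrite !big_split /= !sum_nat_const card_ord in S1 S2.
rewrite (sum_pred b) (sum_succ a) in S1 S2.
rewrite cardT countS !big_split /=.
move: S1 S2.
set SA := \sum_(i < k.+1) a i.
set SB := \sum_(i < k.+1) b i.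
set SC := \sum_(i < k.+1) Cg i.
nia.
Qed.

End LD.

End Core.

Section Transfer.
Variables (U : finType) (e : rel U).
Definition e' : rel 'I_#|U| := fun x y => e (enum_val x) (enum_val y).
Local Notation f := (@enum_val U U).
Local Notation g := (@enum_rank U).
Let fK : cancel f g := @enum_valK U.
Let gK : cancel g f := @enum_rankK U.

Lemma tr_simple : simple_graph e -> simple_graph e'.
Proof. by move=> [sy ir]; split => [x y|x]; [exact: sy | exact: ir]. Qed.

Lemma tr_conn : connected_graph e -> connected_graph e'.
Proof.
move=> C x y.
have H : forall a b, connect e a b -> connect e' (g a) (g b).
  move=> a b /connectP [p pth ->]; elim: p a pth => [|c p IH] a /=.
    by rewrite connect0.
  move=> /andP [eac pth]; apply: connect_trans (IH _ pth).
  by apply: connect1; rewrite /e' !gK.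
by have := H _ _ (C (f x) (f y)); rewrite !fK.
Qed.

Lemma tr_mem_cnbhd x y : (y \in cnbhd e' x) = (f y \in cnbhd e (f x)).
Proof. by rewrite !inE /e' (inj_eq (can_inj fK)). Qed.

Lemma tr_reg r : regular e r -> regular e' r.
Proof.
move=> R x; rewrite -(R (f x)).
have -> : nbhd e' x = g @: nbhd e (f x).
  by apply/setP => y; rewrite (can2_imset_pre _ gK fK) !inE.
by rewrite card_imset //; exact: can_inj gK.
Qed.

Lemma tr_twins : has_closed_twins e -> has_closed_twins e'.
Proof.
move=> [u [v [uv E]]]; exists (g u), (g v); split.
  by rewrite (can_eq gK).
apply/setP => y; apply: etrans (tr_mem_cnbhd _ _) _; apply: esym.
apply: etrans (tr_mem_cnbhd _ _) _; by rewrite !gK E.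
Qed.

Lemma tr_LD : (forall S, locating_dominating e S -> #|U| < 2 * #|S|) ->
  forall S', locating_dominating e' S' -> #|U| < 2 * #|S'|.
Proof.
move=> H S' /andP [/forallP D /forallP L].
pose S := f @: S'.
have memS : forall y, (f y \in S) = (y \in S').
  by move=> y; rewrite mem_imset //; exact: can_inj fK.
have memS' : forall u, (u \in S) = (g u \in S').
  by move=> u; rewrite -{1}(gK u) memS.
have memI : forall x y, (y \in Iset e' S' x) = (f y \in Iset e S (f x)).
  by move=> x y; rewrite /Iset !in_setI tr_mem_cnbhd memS.
have -> : #|S'| = #|S| by rewrite card_imset //; exact: can_inj fK.
apply: H; apply/andP; split.
  apply/forallP => u; have /set0Pn [y Hy] := D (g u).
  by apply/set0Pn; exists (f y); move: Hy; rewrite memI gK.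
apply/forallP => u; apply/forallP => v; apply/implyP => /andP [/andP [uS vS] uv].
have /forallP /(_ (g v)) /implyP := L (g u).
rewrite -!memS' uS vS (can_eq gK) uv => /(_ isT); apply: contra => /eqP E.
by apply/eqP/setP => y; rewrite !memI !gK E.
Qed.

Lemma tr_gamma : 0 < #|U| -> (forall S, locating_dominating e S -> #|U| < 2 * #|S|) ->
  #|U| < 2 * gammaLD e'.
Proof.
move=> n0 H; rewrite /gammaLD.
apply: (big_ind (fun x => #|U| < 2 * x)).
- by rewrite card_ord; lia.
- by move=> x y Hx Hy; rewrite /minn; case: ifP.
- by move=> S' HS; exact: tr_LD.
Qed.
End Transfer.

Theorem proposition11 :
  forall r : nat, 4 <= r ->
  forall N : nat, exists (n : nat) (e : rel 'I_n),
    N <= n /\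
    simple_graph e /\ connected_graph e /\ regular e r /\
    has_closed_twins e /\
    n < 2 * gammaLD e.
Proof.
move=> r r4 N.
have Hr : r = r.-1.+1 by rewrite prednK //; lia.
set m := r.-1 in Hr.
have m3 : 3 <= m by lia.
have cardT : #|{: T N m}| = N.+1 * m.+2 by rewrite card_prod card_ord card_P.
exists #|{: T N m}|, (e' (@adj N m)).
split; first by rewrite cardT; nia.
split; first by apply: tr_simple; split; [exact: adj_sym | exact: adj_irr].
split; first by apply: tr_conn; apply: adj_connected; lia.
split; first by rewrite Hr; apply: tr_reg; exact: adj_regular.
split; first by apply: tr_twins; apply: adj_twins; lia.
apply: tr_gamma; first by rewrite cardT; nia.
by move=> S HS; exact: LD_bound.
Qed.
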